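(* Let $G$ be a $(2,4)$ subgraph of $Q_4$ that is minimal, i.e. no subgraph of $G$ with fewer edges is a $(2,4)$ subgraph. Then $G$ does not contain three edges of a single $4$-cycle (2-dimensional face) of $Q_4$; equivalently, $G$ contains no path of three edges whose directions are $a,b,a$ for some coordinates $a\neq b$.
   Context: $Q_n$ denotes the $n$-dimensional hypercube graph on vertex set $\{0,1\}^n$, two vertices adjacent iff they differ in exactly one coordinate; the direction of an edge is the coordinate in which its endpoints differ. Divider–Chooser game on $\{0,1\}^n$ with respect to a subgraph $G$ of $Q_n$: it lasts $n-1$ rounds; starting with the vertex set $\{0,1\}^n$, in each round the Divider picks a coordinate $i\in[n]$ not picked before and the Chooser either deletes all current vertices $x$ with $x_i=0$ or all current vertices with $x_i=1$. After $n-1$ rounds two vertices remain (they form an edge of $Q_n$); the Chooser wins if this edge belongs to $G$. A $(k,n)$ subgraph is a subgraph $G$ of $Q_n$ of maximum degree at most $k$ such that the Chooser has a winning strategy in this game. *)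

(* Defs.v *)
From mathcomp Require Import all_boot.
Set Implicit Arguments. Unset Strict Implicit. Unset Printing Implicit Defensive.

Definition vert (n : nat) := {ffun 'I_n -> bool}.

Definition flip n (x : vert n) (i : 'I_n) : vert n :=
  [ffun j => if j == i then ~~ x j else x j].

Definition qedge n (e : {set vert n}) : bool :=
  [exists x : vert n, exists i : 'I_n, e == [set x; flip x i]].

(* A subgraph G of Q_n is represented by its edge set E (isolated vertices
   are irrelevant for degrees and for the game). *)
Definition is_qsubgraph n (E : {set {set vert n}}) : bool :=
  [forall e in E, qedge e].

Definition max_deg_le n (k : nat) (E : {set {set vert n}}) : bool :=
  [forall v : vert n, #|[set e in E | v \in e]| <= k].

(* Game states: partial assignments of the picked coordinates. *)
Definition pstate (n : nat) := {ffun 'I_n -> option bool}.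

Definition upd n (p : pstate n) (i : 'I_n) (b : bool) : pstate n :=
  [ffun j => if j == i then Some b else p j].

Definition alive n (p : pstate n) : {set vert n} :=
  [set x : vert n | [forall j : 'I_n, if p j is Some b then x j == b else true]].

(* Chooser wins with r rounds remaining from state p:
   for every coordinate the Divider may pick (not picked before),
   the Chooser can keep x_i = b (deleting the other half) and still win;
   at the end the remaining vertex set must be an edge of G. *)
Fixpoint chooser_wins n (E : {set {set vert n}}) (r : nat) (p : pstate n) : bool :=
  match r with
  | 0 => alive p \in E
  | r'.+1 => [forall i : 'I_n, (p i == None) ==>
               [exists b : bool, chooser_wins E r' (upd p i b)]]
  end.

Definition empty_state n : pstate n := [ffun => None].

Definition kn_subgraph (k n : nat) (E : {set {set vert n}}) : bool :=
  [&& is_qsubgraph E, max_deg_le k E & chooser_wins E n.-1 (empty_state n)].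

Arguments kn_subgraph k n E : clear implicits.

Definition minimal_kn_subgraph (k n : nat) (E : {set {set vert n}}) : Prop :=
  kn_subgraph k n E /\
  forall E' : {set {set vert n}}, E' \subset E -> #|E'| < #|E| -> ~~ kn_subgraph k n E'.
Arguments minimal_kn_subgraph k n E : clear implicits.

(* Main.v *)
Require Import Defs.
From mathcomp Require Import all_boot.
From Stdlib Require Import NArith.
Set Implicit Arguments. Unset Strict Implicit. Unset Printing Implicit Defensive.

Definition bools := [:: false; true].
Definition bitn (c i : nat) : bool := odd (c %/ 2 ^ i).
Definition ekeyN (c i : nat) : nat := 4 * (c - bitn c i * 2 ^ i) + i.
Definition flipN (c a : nat) : nat := if bitn c a then c - 2 ^ a else c + 2 ^ a.
Definition leafkey (i1 : nat) (b1 : bool) (i2 : nat) (b2 : bool) (i3 : nat) (b3 : bool) : nat :=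
  4 * (b1 * 2 ^ i1 + b2 * 2 ^ i2 + b3 * 2 ^ i3) + (6 - (i1 + i2 + i3)).
Definition WD :=
 [seq [seq [seq [seq [seq [seq leafkey i1 b1 i2 b2 i3 b3 | b3 <- bools]
   | i3 <- iota 0 4 & (i3 != i1) && (i3 != i2)] | b2 <- bools] | i2 <- iota 0 4 & i2 != i1]
   | b1 <- bools] | i1 <- iota 0 4].
Definition map6 (A B : Type) (f : A -> B) := map (map (map (map (map (map f))))).
Definition WDN := Eval vm_compute in map6 N.of_nat WD.
Section Ev.
Variables (A : Type) (t : A -> bool).
Definition ev6 (D : seq (seq (seq (seq (seq (seq A)))))) :=
  all (has (all (has (all (has t))))) D.
End Ev.
Definition INC := [seq [seq ekeyN c f | f <- iota 0 4] | c <- iota 0 16].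
Definition INCN := Eval vm_compute in map (map N.of_nat) INC.
Definition CK := flatten INC.
Definition maskOf (s : seq nat) : N := foldr (fun k m => N.setbit m (N.of_nat k)) 0%N s.
Definition hi0 := Eval vm_compute in maskOf CK.
Definition lo0 := Eval vm_compute in maskOf [:: 0; 5; 8].
Definition degokM (t : N -> bool) := all (fun l => count t l <= 2) INCN.
Definition winM (m : N) := ev6 (N.testbit m) WDN.
(* heuristic data: key, incidence lists of its two endpoints *)
Definition EDGH := Eval vm_compute in
  flatten [seq [seq (N.of_nat (ekeyN c f), map N.of_nat (nth [::] INC c), map N.of_nat (nth [::] INC (c + 2 ^ f)))
   | f <- iota 0 4 & ~~ bitn c f] | c <- iota 0 16].
Definition chooseE (lo hi : N) : option N :=
  let sc e := let: (k, u, w) := e in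
     if N.testbit lo k || ~~ N.testbit hi k then 0 else
     let d1 := count (N.testbit lo) u in let d2 := count (N.testbit lo) w in
     if (2 <= d1) || (2 <= d2) then 100 else (d1 + d2).+1 in
  let best := foldl (fun acc e => if sc acc.2 < sc e then (true, e) else acc) (false, (0%N, [::], [::])) EDGH in
  if best.1 then Some best.2.1.1 else None.
Fixpoint dfs (n : nat) (lo hi : N) : bool :=
  match n with 0 => false | n'.+1 =>
   if ~~ degokM (N.testbit lo) then true else
   if ~~ winM hi then true else
   if winM (N.clearbit lo 0) then true else
   match chooseE lo hi with None => false
   | Some k => dfs n' lo (N.clearbit hi k) && dfs n' (N.setbit lo k) hi end end.

Lemma ev6_mono (A : Type) (t t' : A -> bool) D :
  (forall k, t k -> t' k) -> ev6 t D -> ev6 t' D.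
Proof.
move=> H; apply: sub_all => x; apply: sub_has => y; apply: sub_all => z;
apply: sub_has => u; apply: sub_all => w; apply: sub_has => k; exact: H.
Qed.

Lemma degok_anti (t t' : N -> bool) :
  (forall k, t k -> t' k) -> degokM t' -> degokM t.
Proof.
move=> H; apply: sub_all => l /= Hl; apply: leq_trans Hl; exact: sub_count.
Qed.

Lemma dfsS n lo hi : dfs n.+1 lo hi =
   if ~~ degokM (N.testbit lo) then true else
   if ~~ winM hi then true else
   if winM (N.clearbit lo 0) then true else
   match chooseE lo hi with None => false
   | Some k => dfs n lo (N.clearbit hi k) && dfs n (N.setbit lo k) hi end.
Proof. by []. Qed.

Lemma dfs_sound n lo hi : dfs n lo hi ->
  forall t t2 : N -> bool,
  (forall k, N.testbit lo k -> t k) -> (forall k, t k -> N.testbit hi k) ->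
  (forall k, k <> 0%N -> t k -> t2 k) ->
  degokM t -> ev6 t WDN -> ~~ ev6 t2 WDN -> False.
Proof.
elim: n lo hi => [//|n IH] lo hi.
rewrite dfsS => Hd t t2 Hlo Hhi H12 Hdeg Hw Hw2.
case: ifP Hd => [/negP Hdl _|_]; first by apply: Hdl; exact: degok_anti Hdeg.
case: ifP => [/negP Hwh _|_]; first by apply: Hwh; exact: ev6_mono Hw.
case: ifP => [Hwl _|_].
  move/negP: Hw2; apply; apply: ev6_mono Hwl => k.
  rewrite N.clearbit_eqb => /andP [Hk Hk0]; apply: H12 (Hlo _ Hk).
  by move=> E; move: Hk0; rewrite E.
case: (chooseE lo hi) => [k /andP [H1 H2]|//].
case Htk: (t k).
- apply: (IH _ _ H2 t t2) => // j.
  rewrite N.setbit_eqb => /orP [/N.eqb_eq <- //|]; exact: Hlo.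
- apply: (IH _ _ H1 t t2) => // j Hj.
  rewrite N.clearbit_eqb Hhi //=; apply/negP => /N.eqb_eq E; subst j; by rewrite Htk in Hj.
Qed.

Lemma dfs_main : dfs 40 lo0 hi0.
Proof. vm_compute. reflexivity. Qed.

Definition rest (a b : nat) := [seq j <- iota 0 4 | (j != a) && (j != b)].
Definition sigL (a b : nat) := [:: a; b] ++ rest a b.
Definition phiC (xc : nat) (s : seq nat) (c : nat) :=
  foldl (fun acc j => if bitn c j then flipN acc (nth 0 s j) else acc) xc (iota 0 4).
Definition Phi (xc : nat) (s : seq nat) (k : nat) := ekeyN (phiC xc s (k %/ 4)) (nth 0 s (k %% 4)).

Fixpoint lexle (T : Type) (le : T -> T -> bool) (s1 s2 : seq T) : bool :=
  match s1, s2 with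
  | [::], _ => true
  | _ :: _, [::] => false
  | x :: s1', y :: s2' => if le x y then (if le y x then lexle le s1' s2' else true) else false
  end.
Definition le1 := lexle leq.
Definition le2 := lexle le1.
Definition le3 := lexle le2.
Definition le4 := lexle le3.
Definition le5 := lexle le4.
Definition canon6 (D : seq (seq (seq (seq (seq (seq nat)))))) :=
  sort le5 (map (fun x => sort le4 (map (fun x => sort le3 (map (fun x => sort le2
   (map (fun x => sort le1 (map (fun x => sort leq x) x)) x)) x)) x)) D).
Definition eqv6 D1 D2 := canon6 D1 == canon6 D2.

Definition symcheck1 (xc a b : nat) :=
  let s := sigL a b in let F := Phi xc s in
  [&& F 0 == ekeyN xc a, F 5 == ekeyN (flipN xc a) b, F 8 == ekeyN (flipN (flipN xc a) b) a,
      eqv6 (map6 F WD) WD,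
      all (fun c => (phiC xc s c < 16) && perm_eq (map F (nth [::] INC c)) (nth [::] INC (phiC xc s c))) (iota 0 16)
    & all (fun k => (F k \in CK) && ((k != 0) ==> (F k != F 0))) CK].
Definition symcheck := all (fun xc => all (fun a => all (fun b => (a != b) ==> symcheck1 xc a b) (iota 0 4)) (iota 0 4)) (iota 0 16).
Lemma symcheckP : symcheck.
Proof. Time vm_compute. reflexivity. Qed.

Definition o0 : 'I_4 := @Ordinal 4 0 erefl.
Definition o1 : 'I_4 := @Ordinal 4 1 erefl.
Definition o2 : 'I_4 := @Ordinal 4 2 erefl.
Definition o3 : 'I_4 := @Ordinal 4 3 erefl.
Definition ordN (n : nat) : 'I_4 :=
  match n with 0 => o0 | 1 => o1 | 2 => o2 | _ => o3 end.

Lemma ordN_val (i : 'I_4) : ordN i = i.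
Proof. by apply: val_inj; case: i => [[|[|[|[|m]]]] Hm]. Qed.

Lemma val_ordN n : n < 4 -> val (ordN n) = n.
Proof. by case: n => [|[|[|[|n]]]]. Qed.

Lemma ordN_eq m n : m < 4 -> n < 4 -> (ordN m == ordN n) = (m == n).
Proof. by move=> Hm Hn; rewrite -val_eqE /= !val_ordN. Qed.

Lemma forall4 (P : 'I_4 -> bool) : [forall i, P i] = all (fun n => P (ordN n)) (iota 0 4).
Proof.
apply/forallP/allP => [H n _ | H i]; first exact: H.
by rewrite -(ordN_val i); apply: H; rewrite mem_iota /=.
Qed.

Lemma exists_bool (P : bool -> bool) : [exists b, P b] = P false || P true.
Proof.
apply/existsP/orP => [[b H]|[H|H]]; first by case: b H => H; [right|left].
- by exists false.
- by exists true.
Qed.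

Lemma alli (P : pred nat) n i : all P (iota 0 n) -> i < n -> P i.
Proof. by move=> /allP H Hi; apply: H; rewrite mem_iota. Qed.

Definition code (v : vert 4) : nat := v o0 + 2 * v o1 + 4 * v o2 + 8 * v o3.
Definition vdec (c : nat) : vert 4 := [ffun j : 'I_4 => bitn c j].
Definition ekey (v : vert 4) (a : 'I_4) : nat := ekeyN (code v) a.
Definition edge_of (k : nat) : {set vert 4} :=
  [set vdec (k %/ 4); flip (vdec (k %/ 4)) (ordN (k %% 4))].

Lemma vert_nth (v : vert 4) (j : 'I_4) : v j = nth false [:: v o0; v o1; v o2; v o3] j.
Proof. by case: j => [[|[|[|[|m]]]] Hm] //=; congr (v _); apply: val_inj. Qed.

Lemma bitn_code (b0 b1 b2 b3 : bool) j : j < 4 ->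
  bitn (b0 + 2 * b1 + 4 * b2 + 8 * b3) j = nth false [:: b0; b1; b2; b3] j.
Proof. by case: j => [|[|[|[|j]]]] //; case: b0; case: b1; case: b2; case: b3. Qed.

Lemma vdec_code v : vdec (code v) = v.
Proof. by apply/ffunP => j; rewrite ffunE /code bitn_code ?ltn_ord // [RHS]vert_nth. Qed.

Lemma code_vdec_chk : all (fun c => bitn c 0 + 2 * bitn c 1 + 4 * bitn c 2 + 8 * bitn c 3 == c) (iota 0 16).
Proof. by []. Qed.

Lemma code_vdec c : c < 16 -> code (vdec c) = c.
Proof.
move=> Hc; rewrite /code !ffunE /=.
exact/eqP/(alli code_vdec_chk Hc).
Qed.

Lemma code_lt v : code v < 16.
Proof. by rewrite /code; case: (v o0); case: (v o1); case: (v o2); case: (v o3). Qed.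

Lemma FL_chk : all (fun c => all (fun a => (flipN c a < 16) && all (fun j =>
   (if j == a then ~~ bitn c j else bitn c j) == bitn (flipN c a) j) (iota 0 4)) (iota 0 4)) (iota 0 16).
Proof. by vm_compute. Qed.

Lemma FL c (a : 'I_4) : c < 16 -> flip (vdec c) a = vdec (flipN c a).
Proof.
move=> Hc; apply/ffunP => j; rewrite !ffunE.
have /andP [_ H] := alli (alli FL_chk Hc) (ltn_ord a).
by have /eqP := alli H (ltn_ord j).
Qed.

Lemma flipN_lt c (a : 'I_4) : c < 16 -> flipN c a < 16.
Proof.
by move=> Hc; have /andP [] := alli (alli FL_chk Hc) (ltn_ord a).
Qed.

Lemma code_flip v (a : 'I_4) : code (flip v a) = flipN (code v) a.
Proof.
by rewrite -{1}(vdec_code v) FL ?code_lt // code_vdec // flipN_lt // code_lt.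
Qed.

Lemma flipK v (a : 'I_4) : flip (flip v a) a = v.
Proof. by apply/ffunP => j; rewrite !ffunE; case: eqP => // ->; rewrite negbK. Qed.

Lemma ekey_chk : all (fun c => all (fun a =>
   (ekeyN c a %/ 4 == if bitn c a then flipN c a else c) && (ekeyN c a %% 4 == a)) (iota 0 4)) (iota 0 16).
Proof. by vm_compute. Qed.

Lemma ekey_div c (a : 'I_4) : c < 16 ->
  ekeyN c a %/ 4 = (if bitn c a then flipN c a else c) /\ ekeyN c a %% 4 = a.
Proof.
by move=> Hc; have /andP [/eqP -> /eqP ->] := alli (alli ekey_chk Hc) (ltn_ord a).
Qed.

Lemma edge_ekey v (a : 'I_4) : edge_of (ekey v a) = [set v; flip v a].
Proof.
rewrite /edge_of /ekey; have [-> ->] := ekey_div a (code_lt v); rewrite ordN_val.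
case: ifP => _; last by rewrite vdec_code.
by rewrite -FL ?code_lt // vdec_code flipK setUC.
Qed.

Lemma flip_at v (a j : 'I_4) : flip v a j = if j == a then ~~ v j else v j.
Proof. by rewrite ffunE. Qed.

Lemma flip_neq v (a : 'I_4) : flip v a != v.
Proof. by apply/eqP => /ffunP /(_ a); rewrite flip_at eqxx; case: (v a). Qed.

Lemma edge_eq v w (a b : 'I_4) : [set v; flip v a] = [set w; flip w b] ->
  a = b /\ (v = w \/ v = flip w b).
Proof.
move=> E.
have Hv : v \in [set w; flip w b] by rewrite -E set21.
have Hf : flip v a \in [set w; flip w b] by rewrite -E set22.
move: Hv Hf; rewrite !inE => /orP [/eqP Evw | /eqP Evf] /orP [/eqP H | /eqP H].
- by subst; move: (flip_neq w a); rewrite H eqxx.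
- subst; split; last by left.
  move/ffunP: H => /(_ a); rewrite !flip_at eqxx; case: eqP => // _; by case: (w a).
- subst; split; last by right.
  move/ffunP: H => /(_ b); rewrite !flip_at eqxx; case: eqP => // _; by case: (w b).
- by subst; move: (flip_neq (flip w b) a); rewrite H eqxx.
Qed.

Lemma deg_count E v : max_deg_le 2 E ->
  count (mem E) [seq [set v; flip v (ordN f)] | f <- iota 0 4] <= 2.
Proof.
move=> /forallP /(_ v) Hd; apply: leq_trans Hd.
rewrite -size_filter cardE; apply: uniq_leq_size.
  apply: filter_uniq; rewrite map_inj_in_uniq ?iota_uniq // => f g.
  rewrite !mem_iota /= => Hf Hg /edge_eq [/eqP] ; rewrite ordN_eq // => /eqP -> //.
move=> e; rewrite mem_filter => /andP [He /mapP [f _ Ef]]; subst e.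
by rewrite mem_enum inE set21 andbT.
Qed.

Lemma ekeyN_vdec c f : c < 16 -> f < 4 -> ekeyN c f = ekey (vdec c) (ordN f).
Proof. by move=> Hc Hf; rewrite /ekey code_vdec // val_ordN. Qed.

Lemma INC_nth c : c < 16 -> nth [::] INC c = [seq ekeyN c f | f <- iota 0 4].
Proof. by move=> Hc; rewrite /INC (nth_map 0) ?size_iota // nth_iota. Qed.

Lemma deg_INC E c : max_deg_le 2 E -> c < 16 ->
  count (fun k => edge_of k \in E) (nth [::] INC c) <= 2.
Proof.
move=> Hd Hc; rewrite INC_nth //.
have -> : count (fun k => edge_of k \in E) [seq ekeyN c f | f <- iota 0 4] =
   count (mem E) (map edge_of [seq ekeyN c f | f <- iota 0 4]) by rewrite count_map.
apply: leq_trans (deg_count (vdec c) Hd); apply: eq_leq.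
congr count; rewrite -map_comp; apply/eq_in_map => f; rewrite mem_iota /= => Hf.
by rewrite /= ekeyN_vdec // edge_ekey.
Qed.

Lemma ekey_flip_chk : all (fun c => all (fun a => ekeyN (flipN c a) a == ekeyN c a) (iota 0 4)) (iota 0 16).
Proof. by vm_compute. Qed.

Lemma ekey_flip w (a : 'I_4) : ekey (flip w a) a = ekey w a.
Proof. by rewrite /ekey code_flip; apply/eqP/(alli (alli ekey_flip_chk (code_lt w)) (ltn_ord a)). Qed.

Lemma CK_ekey k : k \in CK -> exists v a, k = ekey v a.
Proof.
rewrite /CK /INC => /flatten_mapP [c Hc] /mapP [f Hf ->].
move: Hc Hf; rewrite !mem_iota /= => Hc Hf; exists (vdec c), (ordN f); exact: ekeyN_vdec.
Qed.

Lemma edge_inj k k' : k \in CK -> k' \in CK -> edge_of k = edge_of k' -> k = k'.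
Proof.
move=> /CK_ekey [v [a ->]] /CK_ekey [w [b ->]]; rewrite !edge_ekey => /edge_eq [<- [->|->]] //.
by rewrite ekey_flip.
Qed.

Definition vp (p : pstate 4) : vert 4 := [ffun j => odflt false (p j)].

Lemma alive_leaf (p : pstate 4) (i : 'I_4) : p i = None -> (forall j, j != i -> p j != None) ->
  alive p = [set vp p; flip (vp p) i].
Proof.
move=> Hpi Hn; apply/setP => w; rewrite !inE; apply/idP/idP.
- move/forallP => H; apply/orP; case Hwi: (w i); [right|left]; apply/eqP/ffunP => j;
  rewrite ?flip_at !ffunE; (case: (eqVneq j i) => [->|Hji]; [by rewrite Hpi Hwi|]);
  by move: (H j) (Hn j Hji); case: (p j) => //= b /eqP ->.
- move=> /orP [/eqP -> | /eqP ->]; apply/forallP => j; rewrite ?flip_at !ffunE;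
  case Hpj: (p j) => [b|] //=; case: (eqVneq j i) => [Eji|_] //=.
  by move: Hpj; rewrite Eji Hpi.
Qed.

Lemma cwS (E : {set {set vert 4}}) r (p : pstate 4) : chooser_wins E r.+1 p =
  [forall i, (p i == None) ==> [exists b, chooser_wins E r (upd p i b)]].
Proof. by []. Qed.

Lemma cw_step (X : Type) (ev : X -> bool) (E : {set {set vert 4}}) r (p : pstate 4) (q : pred nat) (D : nat -> bool -> X) :
  (forall j, j < 4 -> (p (ordN j) == None) = q j) ->
  (forall j b, j < 4 -> q j -> chooser_wins E r (upd p (ordN j) b) = ev (D j b)) ->
  chooser_wins E r.+1 p = all (has ev) [seq [seq D j b | b <- bools] | j <- iota 0 4 & q j].
Proof.
move=> Hq HD; rewrite cwS forall4 all_map all_filter; apply: eq_in_all => j.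
rewrite mem_iota /= => Hj; rewrite Hq //; case Hqj: (q j) => //=.
by rewrite exists_bool !HD //= orbF.
Qed.

Lemma upd_ordN (p : pstate 4) i b (j : 'I_4) : i < 4 ->
  upd p (ordN i) b j = if val j == i then Some b else p j.
Proof. by move=> Hi; rewrite ffunE -val_eqE val_ordN. Qed.

Definition dist3 (i1 i2 i3 : nat) := [&& i2 != i1, i3 != i1 & i3 != i2].

Lemma F1_chk : all (fun i1 => all (fun i2 => all (fun i3 => dist3 i1 i2 i3 ==>
  let f := 6 - (i1 + i2 + i3) in
  [&& f < 4, f != i1, f != i2, f != i3 &
     all (fun j => [&& j != i1, j != i2 & j != i3] ==> (j == f)) (iota 0 4)])
  (iota 0 4)) (iota 0 4)) (iota 0 4).
Proof. by vm_compute. Qed.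

Lemma F2_chk : all (fun i1 => all (fun i2 => all (fun i3 => dist3 i1 i2 i3 ==>
  all (fun b1 : bool => all (fun b2 : bool => all (fun b3 : bool => all (fun j =>
    bitn (b1 * 2 ^ i1 + b2 * 2 ^ i2 + b3 * 2 ^ i3) j ==
    (if j == i3 then b3 else if j == i2 then b2 else if j == i1 then b1 else false))
  (iota 0 4)) bools) bools) bools)
  (iota 0 4)) (iota 0 4)) (iota 0 4).
Proof. by vm_compute. Qed.

Lemma allb (P : pred bool) b : all P bools -> P b.
Proof. by case: b => /andP [] // _ /andP []. Qed.

Lemma leaf_eq i1 i2 i3 (b1 b2 b3 : bool) : i1 < 4 -> i2 < 4 -> i3 < 4 -> dist3 i1 i2 i3 ->
  alive (upd (upd (upd (empty_state 4) (ordN i1) b1) (ordN i2) b2) (ordN i3) b3)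
  = edge_of (leafkey i1 b1 i2 b2 i3 b3).
Proof.
move=> H1 H2 H3 Hd.
set p3 := upd _ (ordN i3) b3.
have Hp3 : forall j : 'I_4, p3 j = if val j == i3 then Some b3 else if val j == i2 then Some b2
          else if val j == i1 then Some b1 else None.
  by move=> j; rewrite !upd_ordN // ffunE.
have /implyP /(_ Hd) := alli (alli (alli F1_chk H1) H2) H3.
set f := 6 - _ => /and5P [Hf4 Hf1 Hf2 Hf3 Hfj].
rewrite (@alive_leaf _ (ordN f)).
- rewrite /edge_of /leafkey -/f (mulnC 4) divnMDl // modnMDl (divn_small Hf4) (modn_small Hf4) addn0.
  suff -> : vdec (b1 * 2 ^ i1 + b2 * 2 ^ i2 + b3 * 2 ^ i3) = vp p3 by [].
  apply/ffunP => j.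
  have -> : vp p3 j = odflt false (p3 j) by rewrite ffunE.
  rewrite Hp3 ffunE.
  have /implyP /(_ Hd) := alli (alli (alli F2_chk H1) H2) H3.
  move=> /(allb b1) /(allb b2) /(allb b3) /allP /(_ j); rewrite mem_iota ltn_ord => /(_ isT) /eqP ->.
  by case: (val j == i3); case: (val j == i2); case: (val j == i1).
- by rewrite Hp3 val_ordN // (negbTE Hf1) (negbTE Hf2) (negbTE Hf3).
- move=> j Hj; rewrite Hp3; case E3: (val j == i3) => //; case E2: (val j == i2) => //.
  case E1: (val j == i1) => //.
  have := alli Hfj (ltn_ord j); rewrite E1 E2 E3 /= => /eqP Hjf.
  have Ej : j = ordN f by apply: val_inj; rewrite /= val_ordN.
  by rewrite Ej eqxx in Hj.
Qed.

Lemma bridge (E : {set {set vert 4}}) :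
  chooser_wins E 3 (empty_state 4) = ev6 (fun k => edge_of k \in E) WD.
Proof.
set T := fun k => edge_of k \in E.
rewrite /ev6 /WD.
rewrite (@cw_step _ (all (has (all (has T)))) E 2 (empty_state 4) predT
  (fun i1 b1 => [seq [seq [seq [seq leafkey i1 b1 i2 b2 i3 b3 | b3 <- bools]
   | i3 <- iota 0 4 & (i3 != i1) && (i3 != i2)] | b2 <- bools] | i2 <- iota 0 4 & i2 != i1])).
- by rewrite filter_predT.
- by move=> j _; rewrite ffunE.
move=> i1 b1 Hi1 _.
rewrite (@cw_step _ (all (has T)) E 1 _ (fun i2 => i2 != i1)
  (fun i2 b2 => [seq [seq leafkey i1 b1 i2 b2 i3 b3 | b3 <- bools]
   | i3 <- iota 0 4 & (i3 != i1) && (i3 != i2)])) //.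
- by move=> j Hj; rewrite upd_ordN // val_ordN // ffunE; case: (j == i1).
move=> i2 b2 Hi2 H21.
rewrite (@cw_step _ T E 0 _ (fun i3 => (i3 != i1) && (i3 != i2))
  (fun i3 b3 => leafkey i1 b1 i2 b2 i3 b3)) //.
- by move=> j Hj; rewrite !upd_ordN // !val_ordN // ffunE; case: (j == i2); case: (j == i1).
move=> i3 b3 Hi3 /andP [H31 H32].
by rewrite /= /T leaf_eq //; apply/and3P.
Qed.

Lemma ev6_map (A B : Type) (t : B -> bool) (f : A -> B) D :
  ev6 t (map6 f D) = ev6 (fun k => t (f k)) D.
Proof.
rewrite /ev6 /map6 all_map; apply: eq_all => x1 /=; rewrite has_map; apply: eq_has => x2 /=.
rewrite all_map; apply: eq_all => x3 /=; rewrite has_map; apply: eq_has => x4 /=.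
rewrite all_map; apply: eq_all => x5 /=; rewrite has_map; exact: eq_has.
Qed.

Lemma psort (T : eqType) (le : rel T) (s : seq T) : perm_eq (sort le s) s.
Proof. by rewrite perm_sort. Qed.

Lemma ev6_canon (t : nat -> bool) D : ev6 t (canon6 D) = ev6 t D.
Proof.
rewrite /ev6 /canon6 (perm_all _ (psort _ _)) all_map; apply: eq_all => x1 /=.
rewrite (perm_has _ (psort _ _)) has_map; apply: eq_has => x2 /=.
rewrite (perm_all _ (psort _ _)) all_map; apply: eq_all => x3 /=.
rewrite (perm_has _ (psort _ _)) has_map; apply: eq_has => x4 /=.
rewrite (perm_all _ (psort _ _)) all_map; apply: eq_all => x5 /=.
by rewrite (perm_has _ (psort _ _)).
Qed.

Lemma ev6_eqv (t : nat -> bool) D1 D2 : eqv6 D1 D2 -> ev6 t D1 = ev6 t D2.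
Proof. by move/eqP => H; rewrite -ev6_canon H ev6_canon. Qed.

Lemma ev6_ext (A : eqType) (P : pred A) (t t' : A -> bool) D :
  all (all (all (all (all (all P))))) D -> (forall k, P k -> t k = t' k) -> ev6 t D = ev6 t' D.
Proof.
move=> HD H; rewrite /ev6; apply: eq_in_all => x1 /(allP HD) H1; apply: eq_in_has => x2 /(allP H1) H2.
apply: eq_in_all => x3 /(allP H2) H3; apply: eq_in_has => x4 /(allP H3) H4.
apply: eq_in_all => x5 /(allP H4) H5; apply: eq_in_has => k /(allP H5); exact: H.
Qed.

Lemma WD_CK : all (all (all (all (all (all (fun k => k \in CK)))))) WD.
Proof. by vm_compute. Qed.

Lemma WDN_eq : WDN = map6 N.of_nat WD.
Proof. by vm_compute. Qed.

Lemma INCN_eq : INCN = map (map N.of_nat) INC.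
Proof. by vm_compute. Qed.

Lemma hi0_eq : hi0 = maskOf CK.
Proof. by vm_compute. Qed.

Lemma lo0_bits k : N.testbit lo0 k = (0 =? k)%N || (5 =? k)%N || (8 =? k)%N.
Proof.
have -> : lo0 = N.setbit (N.setbit (N.setbit 0 8) 5) 0 by vm_compute.
by rewrite !N.setbit_eqb N.bits_0 orbF orbA.
Qed.

Lemma mask_mem s x : x \in s -> N.testbit (maskOf s) (N.of_nat x).
Proof.
elim: s => //= y s IH; rewrite inE N.setbit_eqb => /orP [/eqP ->|/IH ->]; last by rewrite orbT.
by rewrite N.eqb_refl.
Qed.

Theorem mainTheorem8 (E : {set {set vert 4}}) :
  minimal_kn_subgraph 2 4 E ->
  forall (x : vert 4) (a b : 'I_4), a != b ->
    ~ [/\ [set x; flip x a] \in E,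
          [set flip x a; flip (flip x a) b] \in E &
          [set flip (flip x a) b; flip (flip (flip x a) b) a] \in E].
Proof.
move=> [Hkn Hmin] x a b Hab [P1 P2 P3].
move: Hkn => /and3P [Hq Hd Hw].
set s1 := [set x; flip x a].
set E' := E :\ s1.
have Hw' : chooser_wins E' 3 (empty_state 4) = false.
  have Hsub : E' \subset E by apply: subsetDl.
  have Hlt : #|E'| < #|E| by rewrite (cardsD1 s1 E) P1.
  move: (Hmin E' Hsub Hlt); rewrite /kn_subgraph /=.
  have -> : is_qsubgraph E'.
    move/forallP: Hq => Hq; apply/forallP => e; apply/implyP => He.
    by apply: (implyP (Hq e)); apply: (subsetP Hsub).
  have -> : max_deg_le 2 E'.
    move/forallP: Hd => Hd; apply/forallP => v; apply: leq_trans (Hd v).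
    apply: subset_leq_card; apply/subsetP => e; rewrite !inE => /andP [/andP [_ ->] ->] //.
  by move/negbTE.
set xc := code x.
have Hxc : xc < 16 by exact: code_lt.
have Hab' : (val a != val b) by [].
have := alli (alli (alli (symcheckP : all _ (iota 0 16)) Hxc) (ltn_ord a)) (ltn_ord b).
rewrite Hab' /= /symcheck1.
set F := Phi xc (sigL a b).
move=> /and3P [/eqP C0 /eqP C5 /and4P [/eqP C8 C4 C3 C6]].
set T := fun k => edge_of k \in E.
set T' := fun k => edge_of k \in E'.
have HCK0 : 0 \in CK by vm_compute.
have HC6 : forall k, k \in CK -> (F k \in CK) && ((k != 0) ==> (F k != F 0)) := fun k Hk => allP C6 k Hk.
pose t (n : N) := (N.to_nat n \in CK) && T (F (N.to_nat n)).
pose t2 (n : N) := T' (F (N.to_nat n)).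
apply: (dfs_sound dfs_main (t := t) (t2 := t2)).
- move=> k; rewrite lo0_bits => /orP [/orP [] |] /N.eqb_eq <-; rewrite /t /=.
  + by rewrite /T C0 -/(ekey x a) edge_ekey.
  + change (T (F 5)).
    by rewrite /T C5 -code_flip -/(ekey (flip x a) b) edge_ekey.
  + change (T (F 8)).
    by rewrite /T C8 -!code_flip -/(ekey (flip (flip x a) b) a) edge_ekey.
- move=> k /andP [Hk _]; rewrite hi0_eq -(N2Nat.id k); exact: mask_mem.
- move=> k Hk0 /andP [Hk]; rewrite /T => HT; rewrite /t2 /T' /E' !inE HT andbT.
  have /andP [HFk /implyP HFne] := HC6 _ Hk.
  have /andP [HF0 _] := HC6 _ HCK0.
  have Hj0 : N.to_nat k != 0.
    by apply/eqP => H0; apply: Hk0; rewrite -(N2Nat.id k) H0.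
  apply/negP => /eqP Heq; move: (HFne Hj0); rewrite (@edge_inj (F (N.to_nat k)) (F 0)) ?eqxx //.
  by rewrite Heq /s1 C0 -/(ekey x a) edge_ekey.
- rewrite /degokM INCN_eq all_map; apply/allP => l /mapP [c Hc ->].
  move: Hc; rewrite mem_iota /= => Hc.
  have /andP [Hpc Hperm] := alli C3 Hc.
  suff H : count t (map N.of_nat (nth [::] INC c)) <= 2 by move: H; rewrite INC_nth.
  rewrite count_map; apply: leq_trans (deg_INC Hd Hpc).
  rewrite -(permP Hperm) count_map.
  by apply: sub_count => k /=; rewrite /t Nat2N.id => /andP [_ H].
- rewrite WDN_eq ev6_map.
  rewrite (@ev6_ext _ (fun k => k \in CK) _ (fun k => T (F k)) _ WD_CK); last first.
    by move=> k Hk; rewrite /t Nat2N.id Hk.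
  by rewrite -(ev6_map T F) (ev6_eqv _ C4) -bridge.
- rewrite WDN_eq ev6_map.
  have -> : ev6 (fun k => t2 (N.of_nat k)) WD = ev6 (fun k => T' (F k)) WD.
    by apply: (ev6_ext WD_CK) => k _; rewrite /t2 Nat2N.id.
  by rewrite -(ev6_map T' F) (ev6_eqv _ C4) -bridge Hw'.
Qed.
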